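(* Let $m\geq 1$ be an integer. For all integers $n\geq 1$ and all real $x\in(0,\pi)$, $$\sum_{k=0}^n \binom{n-k+m}{m}\cos(kx)>m.$$ Moreover, the lower bound $m$ is sharp, i.e. it cannot be replaced by any larger constant (valid for all $n\ge1$, $x\in(0,\pi)$). *)

(* Defs.v *)
From Stdlib Require Import Reals.
Open Scope R_scope.

Definition Ssum (m n : nat) (x : R) : R :=
  sum_f_R0 (fun k => Binomial.C (n - k + m) m * cos (INR k * x)) n.

(* Main.v *)
Require Import Defs.
From Stdlib Require Import Reals Lra Lia Factorial.
Open Scope R_scope.

Lemma Cnn (n : nat) : Binomial.C n n = 1.
Proof. unfold Binomial.C. rewrite Nat.sub_diag. simpl fact; change (INR 1) with 1.
  field. apply INR_fact_neq_0. Qed.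

Lemma Cn0 (n : nat) : Binomial.C n 0 = 1.
Proof. unfold Binomial.C. rewrite Nat.sub_0_r. simpl fact; change (INR 1) with 1.
  field. apply INR_fact_neq_0. Qed.

Lemma CSnn (n : nat) : Binomial.C (S n) n = INR (S n).
Proof. unfold Binomial.C. replace (S n - n)%nat with 1%nat by lia.
  change (fact (S n)) with (S n * fact n)%nat. rewrite mult_INR. simpl fact; change (INR 1) with 1.
  field. apply INR_fact_neq_0. Qed.

Lemma Ssum0 m x : Ssum m 0 x = 1.
Proof. unfold Ssum. simpl. rewrite Cnn, Rmult_0_l, cos_0. ring. Qed.

Lemma Ssum_rec m n x : Ssum (S m) (S n) x = Ssum (S m) n x + Ssum m (S n) x.
Proof.
  unfold Ssum. rewrite !tech5. rewrite Nat.sub_diag, !Nat.add_0_l, !Cnn.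
  assert (H : sum_f_R0 (fun k => Binomial.C (S n - k + S m) (S m) * cos (INR k * x)) n =
     sum_f_R0 (fun k => Binomial.C (n - k + S m) (S m) * cos (INR k * x)) n +
     sum_f_R0 (fun k => Binomial.C (S n - k + m) m * cos (INR k * x)) n).
  { rewrite <- plus_sum. apply sum_eq. intros i Hi.
    replace (S n - i + S m)%nat with (S (n - i + S m)) by lia.
    replace (S n - i + m)%nat with (n - i + S m)%nat by lia.
    rewrite <- pascal by lia. ring. }
  rewrite H. ring.
Qed.

Lemma cos_step n x :
  cos (INR (S (S n)) * x) + cos (INR n * x) = 2 * cos (INR (S n) * x) * cos x.
Proof.
  replace (INR (S (S n)) * x) with (INR (S n) * x + x) by (rewrite !S_INR; ring).
  replace (INR n * x) with (INR (S n) * x - x) by (rewrite !S_INR; ring).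
  rewrite cos_plus, cos_minus. ring.
Qed.

Lemma sumcos n x : 2 * (1 - cos x) * Ssum 0 n x =
   (1 - cos x) + cos (INR n * x) - cos (INR (S n) * x).
Proof.
  induction n.
  - rewrite Ssum0. simpl INR. rewrite Rmult_0_l, cos_0, ?Rmult_1_l, ?Rmult_1_r. ring.
  - unfold Ssum in *. rewrite tech5, Nat.sub_diag, Nat.add_0_l, Cnn.
    rewrite Rmult_plus_distr_l.
    assert (E : sum_f_R0 (fun k => Binomial.C (S n - k + 0) 0 * cos (INR k * x)) n =
                sum_f_R0 (fun k => Binomial.C (n - k + 0) 0 * cos (INR k * x)) n).
    { apply sum_eq. intros i _. rewrite !Cn0. ring. }
    rewrite E, IHn. pose proof (cos_step n x). lra.
Qed.

Lemma s1 n x : 2 * (1 - cos x) * Ssum 1 n x =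
   INR (S n) * (1 - cos x) + 1 - cos (INR (S n) * x).
Proof.
  induction n.
  - rewrite Ssum0. simpl INR. replace (1 * x) with x by ring. ring.
  - rewrite Ssum_rec, Rmult_plus_distr_l, IHn, sumcos.
    rewrite (S_INR (S n)). ring.
Qed.

Lemma cos_lt1 x : 0 < x < PI -> -1 < cos x < 1.
Proof.
  intros [H1 H2]. pose proof (sin_gt_0 x H1 H2). pose proof (sin2_cos2 x).
  unfold Rsqr in *. split; nra.
Qed.

Lemma pos1 n x : (1 <= n)%nat -> 0 < x < PI -> Ssum 1 n x > 1.
Proof.
  intros Hn Hx. pose proof (cos_lt1 x Hx). pose proof (s1 n x).
  pose proof (COS_bound (INR (S n) * x)).
  destruct (Nat.eq_dec n 1) as [->|Hn2].
  - unfold Ssum. simpl sum_f_R0. simpl Nat.sub. rewrite CSnn, Cnn.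
    simpl INR. rewrite Rmult_0_l, cos_0, ?Rmult_1_l, ?Rmult_1_r. lra.
  - assert (INR (S n) >= 3). { replace 3 with (INR 3) by (simpl; ring).
      apply Rle_ge, le_INR. lia. }
    nra.
Qed.

Lemma pos m n x : (1 <= m)%nat -> (1 <= n)%nat -> 0 < x < PI -> Ssum m n x > INR m.
Proof.
  intros Hm. revert n. induction m as [|m IHm]; [lia|].
  intros n Hn Hx. destruct m as [|m].
  - simpl INR. apply pos1; auto.
  - induction n as [|n IHn]; [lia|].
    rewrite Ssum_rec.
    assert (H2 : Ssum (S m) (S n) x > INR (S m)) by (apply IHm; auto; lia).
    destruct n as [|n].
    + rewrite Ssum0. rewrite (S_INR (S m)). lra.
    + assert (H1 : Ssum (S (S m)) (S n) x > INR (S (S m))) by (apply IHn; lia).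
      pose proof (pos_INR (S m)). lra.
Qed.

Theorem theorem1 (m : nat) (hm : (1 <= m)%nat) :
  (forall (n : nat) (x : R), (1 <= n)%nat -> 0 < x < PI -> Ssum m n x > INR m) /\
  (forall c : R, INR m < c ->
     exists (n : nat) (x : R), (1 <= n)%nat /\ 0 < x < PI /\ Ssum m n x <= c).
Proof.
  split.
  - intros n x Hn Hx. apply pos; auto.
  - intros c Hc. set (d := Rmin (c - INR m) 1).
    assert (Hd1 : 0 < d) by (unfold d; apply Rmin_glb_lt; lra).
    assert (Hd2 : d <= c - INR m) by apply Rmin_l.
    assert (Hd3 : d <= 1) by apply Rmin_r.
    set (y := -1 + d / 2).
    exists 1%nat, (acos y). split; [lia|]. split.
    + apply acos_bound_lt. unfold y; lra.
    + unfold Ssum. simpl sum_f_R0. simpl Nat.sub. rewrite CSnn, Cnn, S_INR.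
      simpl INR. rewrite Rmult_0_l, cos_0, ?Rmult_1_l, ?Rmult_1_r.
      rewrite cos_acos by (unfold y; lra). unfold y. lra.
Qed.
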